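(* Let $n,b$ be integers with $1<n<b$, let $d_0\le d_1\le\cdots\le d_k$ be base-$b$ digits, let $\pi,\sigma$ be permutations of $\{0,\ldots,k\}$, and suppose $p=(d_{\pi(k)},\ldots,d_{\pi(0)})_b=n\cdot(d_{\pi\sigma(k)},\ldots,d_{\pi\sigma(0)})_b$ (an $(n,b,\sigma)$-permutiple) has $j$-th carry equal to $n-1$. If $\{d_0,\ldots,d_k\}$ and $\{\overline{d}_0,\ldots,\overline{d}_k\}$ are the same multiset, then the reflective sibling $$\overline{p}_{\psi^j}=(\overline{d}_{\pi\psi^j(k)},\ldots,\overline{d}_{\pi\psi^j(0)})_b=n\cdot(\overline{d}_{\pi\sigma\psi^j(k)},\ldots,\overline{d}_{\pi\sigma\psi^j(0)})_b$$ may also be represented as $$\overline{p}_{\psi^j}=(d_{\rho\pi\psi^j(k)},\ldots,d_{\rho\pi\psi^j(0)})_b=n\cdot(d_{\rho\pi\sigma\psi^j(k)},\ldots,d_{\rho\pi\sigma\psi^j(0)})_b,$$ where $\rho$ is the reversal permutation $\rho(i)=k-i$.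
   Context: For digits $0\le e_i<b$, $(e_k,\ldots,e_0)_b=\sum_i e_ib^i$ (leading zero digits allowed). A number $(e_k,\ldots,e_0)_b$ is an $(n,b,\sigma)$-permutiple if $(e_k,\ldots,e_0)_b=n\cdot(e_{\sigma(k)},\ldots,e_{\sigma(0)})_b$; here $e_i=d_{\pi(i)}$. Its carries are $c_0=0$, $c_{i+1}=\lfloor (n e_{\sigma(i)}+c_i)/b\rfloor$ ($0\le i\le k$); the $j$-th carry is $c_j$. For a digit $d$ write $\overline{d}=b-1-d$. $\psi$ is the $(k+1)$-cycle $(0,1,\ldots,k)$: $\psi(i)=i+1$ for $i<k$, $\psi(k)=0$. For a carry $c_j=n-1$ (necessarily $0<j\le k$), the reflective sibling of $p$ is the number $\overline{p}_{\psi^j}$ displayed in the claim, which is an $(n,b)$-permutiple satisfying the displayed equation. *)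

(* Defs.v *)
From mathcomp Require Import all_boot all_fingroup.
Set Implicit Arguments. Unset Strict Implicit. Unset Printing Implicit Defensive.

Definition numval (b k : nat) (e : 'I_k.+1 -> nat) : nat :=
  \sum_(i < k.+1) e i * b ^ i.

Fixpoint carry (n b : nat) (f : nat -> nat) (m : nat) : nat :=
  match m with
  | 0 => 0
  | m'.+1 => (n * f m' + carry n b f m') %/ b
  end.

(* extend a function on 'I_(k+1) to nat (value only used for i <= k) *)
Definition ext (k : nat) (e : 'I_k.+1 -> nat) (i : nat) : nat := e (inord i).

(* psi^j, where psi is the (k+1)-cycle (0 1 ... k): i |-> (i + j) mod (k+1) *)
Definition psi_pow (k : nat) (j : nat) (i : 'I_k.+1) : 'I_k.+1 :=
  Ordinal (ltn_pmod (i + j) (ltn0Sn k)).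

Definition dbar (b d : nat) : nat := b.-1 - d.
Arguments psi_pow k j i : clear implicits.

(* Main.v *)
Require Import Defs.
From mathcomp Require Import all_boot all_fingroup zify.

Lemma tele_part (n b : nat) (e f C : nat -> nat) m :
  C 0 = 0 -> (forall i, i < m -> e i + b * C i.+1 = n * f i + C i) ->
  \sum_(0 <= i < m) e i * b ^ i + C m * b ^ m = n * \sum_(0 <= i < m) f i * b ^ i.
Proof.
move=> C0; elim: m => [|m IH] H; first by rewrite !big_geq // C0 mul0n muln0.
rewrite !big_nat_recr //= mulnDr -IH; last by move=> i Hi; apply: H; lia.
have := H m (ltnSn m); rewrite expnS => Hm.
have := congr1 (muln^~ (b ^ m)) Hm; rewrite !mulnDl; nia.
Qed.

Lemma tele (n b k : nat) (e f C : nat -> nat) :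
  C 0 = 0 -> C k.+1 = 0 -> (forall i, i <= k -> e i + b * C i.+1 = n * f i + C i) ->
  \sum_(0 <= i < k.+1) e i * b ^ i = n * \sum_(0 <= i < k.+1) f i * b ^ i.
Proof.
move=> C0 CK H; rewrite -(@tele_part n b e f C k.+1 C0) ?CK ?mul0n ?addn0 //.
Qed.

Lemma digits_lt (b : nat) (e : nat -> nat) m :
  (forall i, e i < b) -> \sum_(0 <= i < m) e i * b ^ i < b ^ m.
Proof.
move=> H; elim: m => [|m IH]; first by rewrite big_geq.
rewrite big_nat_recr //= expnS.
have := H m; have : e m <= b.-1 by have := H m; lia.
move=> h1 h2.
have : e m * b ^ m <= b.-1 * b ^ m by apply: leq_mul.
nia.
Qed.

Lemma carry_lt n b f i : 0 < n -> (forall i, f i < b) -> carry n b f i < n.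
Proof.
move=> n0 H; elim: i => [|i IH] //=.
rewrite ltn_divLR; last by have := H 0; lia.
have := H i => h. have : n * f i <= n * b.-1 by apply: leq_mul => //; lia.
nia.
Qed.

Lemma carry_rel n b k (e f : nat -> nat) :
  0 < b -> (forall i, e i < b) ->
  \sum_(0 <= i < k.+1) e i * b ^ i = n * \sum_(0 <= i < k.+1) f i * b ^ i ->
  (forall i, i <= k -> e i + b * carry n b f i.+1 = n * f i + carry n b f i)
  /\ carry n b f k.+1 = 0.
Proof.
move=> b0 He HE.
set c := carry n b f.
pose r i := (n * f i + c i) %% b.
have rb : forall i, r i < b by move=> i; rewrite /r ltn_mod.
have Hr : forall i, r i + b * c i.+1 = n * f i + c i.
  move=> i; rewrite /r /c /= [_ * (_ %/ _)]mulnC addnC -divn_eq //.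
have P : forall m, \sum_(0 <= i < m) r i * b ^ i + c m * b ^ m
                   = n * \sum_(0 <= i < m) f i * b ^ i.
  by move=> m; apply: tele_part.
have DR : forall m, m <= k.+1 ->
   \sum_(0 <= i < m) e i * b ^ i = \sum_(0 <= i < m) r i * b ^ i.
  move=> m Hm.
  have sp : forall g : nat -> nat, \sum_(0 <= i < k.+1) g i * b ^ i =
     \sum_(0 <= i < m) g i * b ^ i + \sum_(m <= i < k.+1) g i * b ^ i.
    by move=> g; rewrite (big_cat_nat (n:=m)).
  have dv : forall g : nat -> nat, b ^ m %| \sum_(m <= i < k.+1) g i * b ^ i.
    move=> g; rewrite big_nat_cond; apply: dvdn_sum => i /andP [/andP [hi _] _]; apply: dvdn_mull.
    exact: dvdn_exp2l.
  have h1 : (\sum_(0 <= i < k.+1) e i * b ^ i) %% b ^ m = \sum_(0 <= i < m) e i * b ^ i.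
    rewrite sp -modnDmr (eqP (dv e)) addn0 modn_small //; exact: digits_lt.
  have h2 : (n * \sum_(0 <= i < k.+1) f i * b ^ i) %% b ^ m = \sum_(0 <= i < m) r i * b ^ i.
    rewrite sp mulnDr -P -addnA -modnDmr.
    have : b ^ m %| c m * b ^ m + n * \sum_(m <= i < k.+1) f i * b ^ i.
      by apply: dvdn_add; [apply: dvdn_mull | apply: dvdn_mull; apply: dv].
    move/eqP => ->; rewrite addn0 modn_small //; exact: digits_lt.
  by rewrite -h1 -h2 HE.
have Her : forall i, i <= k -> e i = r i.
  move=> i Hi.
  have := DR i.+1 Hi; rewrite !big_nat_recr //= DR; last by lia.
  move/addnI => /eqP; rewrite eqn_pmul2r ?expn_gt0 ?b0 //; by move/eqP.
split.
  by move=> i Hi; rewrite Her // Hr.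
have := P k.+1; rewrite -DR // HE => /eqP; rewrite -{2}(addn0 (n * _)) eqn_add2l.
rewrite muln_eq0 expn_eq0; lia.
Qed.
Lemma dbar_rev (b k : nat) (d : 'I_k.+1 -> nat) :
  (forall i1 i2 : 'I_k.+1, i1 <= i2 -> d i1 <= d i2) ->
  perm_eq [seq d i | i <- enum 'I_k.+1] [seq dbar b (d i) | i <- enum 'I_k.+1] ->
  forall x, dbar b (d x) = d (rev_ord x).
Proof.
move=> Hs Hp.
have sortg : forall g : 'I_k.+1 -> nat, (forall i1 i2 : 'I_k.+1, i1 <= i2 -> g i1 <= g i2) ->
    sorted leq [seq g i | i <- enum 'I_k.+1].
  move=> g Hg.
  have -> : [seq g i | i <- enum 'I_k.+1] = [seq g (inord m) | m <- iota 0 k.+1].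
    by rewrite -val_enum_ord -map_comp; apply: eq_map => i /=; rewrite inord_val.
  rewrite sorted_map.
  apply: (sub_in_sorted (P := mem (iota 0 k.+1))) (iota_ltn_sorted 0 k.+1).
    move=> x y; rewrite !mem_iota /= => hx hy hxy; apply: Hg; rewrite !inordK; lia.
  by apply/allP => x.
have e1 : [seq d i | i <- enum 'I_k.+1] = [seq dbar b (d (rev_ord i)) | i <- enum 'I_k.+1].
  apply: (sorted_eq leq_trans anti_leq).
  - exact: sortg.
  - apply: sortg => i1 i2 h; rewrite /dbar; apply: leq_sub2l; apply: Hs.
    rewrite /=; lia.
  - apply: (perm_trans Hp).
    rewrite (map_comp (fun i => dbar b (d i)) (@rev_ord k.+1)).
    apply: perm_map; rewrite perm_sym; apply: uniq_perm.
    + rewrite map_inj_uniq ?enum_uniq //; exact: rev_ord_inj.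
    + exact: enum_uniq.
    + move=> x; rewrite mem_enum.
      rewrite -{1}(rev_ordK x); apply: map_f; by rewrite mem_enum.
move/eq_in_map: e1 => h x.
by have := h (rev_ord x) (mem_enum _ _); rewrite rev_ordK.
Qed.

Lemma numval_ext b k (e : 'I_k.+1 -> nat) :
  numval b e = \sum_(0 <= i < k.+1) ext e i * b ^ i.
Proof.
by rewrite /numval big_mkord; apply: eq_bigr => i _; rewrite /ext inord_val.
Qed.

Lemma dbar_step n b x y z w : 0 < n -> x < b -> z < b -> y < n -> w < n ->
  x + b * y = n * z + w ->
  dbar b x + b * (n.-1 - y) = n * dbar b z + (n.-1 - w).
Proof.
move=> n0 xb zb yn wn H; rewrite /dbar.
rewrite !mulnBr.
have h1 : b * y <= b * n.-1 by apply: leq_mul => //; lia.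
have h2 : n * z <= n * b.-1 by apply: leq_mul => //; lia.
have h3 : b * n.-1 + b = n * b.-1 + n.
  rewrite -mulnSr prednK // -mulnSr prednK; [lia | lia].
lia.
Qed.

Theorem corollary22 (n b k : nat) (d : 'I_k.+1 -> nat) (pi sigma : 'S_k.+1)
  (j : nat) :
  1 < n -> n < b ->
  (forall i, d i < b) ->
  (forall i1 i2 : 'I_k.+1, i1 <= i2 -> d i1 <= d i2) ->
  (* p is an (n,b,sigma)-permutiple, with e_i = d_{pi(i)} *)
  numval b (fun i => d (pi i)) = n * numval b (fun i => d (pi (sigma i))) ->
  (* the j-th carry equals n-1 *)
  j <= k.+1 ->
  carry n b (ext (fun i => d (pi (sigma i)))) j = n.-1 ->
  (* {d_i} and {dbar_i} are the same multiset *)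
  perm_eq [seq d i | i <- enum 'I_k.+1] [seq dbar b (d i) | i <- enum 'I_k.+1] ->
  numval b (fun i => dbar b (d (pi (psi_pow k j i))))
    = numval b (fun i => d (rev_ord (pi (psi_pow k j i))))
  /\ numval b (fun i => dbar b (d (pi (sigma (psi_pow k j i)))))
    = numval b (fun i => d (rev_ord (pi (sigma (psi_pow k j i)))))
  /\ numval b (fun i => d (rev_ord (pi (psi_pow k j i))))
    = n * numval b (fun i => d (rev_ord (pi (sigma (psi_pow k j i))))).
Proof.
move=> n1 nb db ds Hp jk Hc Hperm.
have Hr := @dbar_rev b k d ds Hperm.
have Hn : forall g : 'I_k.+1 -> 'I_k.+1,
    numval b (fun i => d (rev_ord (g i))) = numval b (fun i => dbar b (d (g i))).
  by move=> g; apply: eq_bigr => i _; rewrite Hr.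
rewrite !Hn; split; first by []; split; first by [].
set E := ext (fun i => d (pi i)).
set F := ext (fun i => d (pi (sigma i))).
have Eb : forall i, E i < b by move=> i; exact: db.
have Fb : forall i, F i < b by move=> i; exact: db.
have b0 : 0 < b by lia.
have HE : \sum_(0 <= i < k.+1) E i * b ^ i = n * \sum_(0 <= i < k.+1) F i * b ^ i.
  by rewrite /E /F -!numval_ext.
have [Hrel cK] := @carry_rel n b k E F b0 Eb HE.
move: Hc Hrel cK; set c := carry n b F => Hc Hrel cK.
have cK' : forall t, t <= k -> c (t.+1 %% k.+1) = c t.+1.
  move=> t ht; case: (ltnP t k) => h; first by rewrite modn_small.
  have -> : t = k by lia.
  by rewrite modnn cK.
have cj : c (j %% k.+1) = n.-1.
  case: (ltnP j k.+1) => h; first by rewrite modn_small.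
  have hj : j = k.+1 by lia.
  by subst j; rewrite modnn -Hc cK.
have cb : forall t, c t < n by move=> t; apply: carry_lt => //; lia.
rewrite !numval_ext.
have ps : forall (h : 'I_k.+1 -> nat), forall i, i < k.+1 ->
   ext (fun i0 => h (psi_pow k j i0)) i = ext h ((i + j) %% k.+1).
  move=> h i hi; rewrite /ext; congr h; apply: val_inj => /=.
  by rewrite inordK // inordK // ltn_pmod.
rewrite (eq_big_nat _ _ (F1 := fun i => ext (fun i0 => dbar b (d (pi (psi_pow k j i0)))) i * b ^ i)
   (F2 := fun i => dbar b (E ((i + j) %% k.+1)) * b ^ i)); last first.
  move=> i /andP [_ hi].
  by rewrite (ps (fun i0 => dbar b (d (pi i0)))).
rewrite (eq_big_nat _ _ (F1 := fun i => ext (fun i0 => dbar b (d (pi (sigma (psi_pow k j i0))))) i * b ^ i)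
   (F2 := fun i => dbar b (F ((i + j) %% k.+1)) * b ^ i)); last first.
  move=> i /andP [_ hi].
  by rewrite (ps (fun i0 => dbar b (d (pi (sigma i0))))).
apply: (@tele n b k _ _ (fun i => n.-1 - c ((i + j) %% k.+1))).
- by rewrite add0n cj subnn.
- by rewrite modnDl cj subnn.
- move=> i hi.
  have hh : (i.+1 + j) %% k.+1 = ((i + j) %% k.+1).+1 %% k.+1.
    by rewrite -[in RHS]addn1 modnDml addn1 addSn.
  rewrite hh.
  have ht : (i + j) %% k.+1 <= k by rewrite -ltnS ltn_pmod.
  rewrite cK' //.
  apply: dbar_step => //; first lia.
  exact: Hrel.
Qed.
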